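(* Let $p$ be a prime, $\tau>0$, $r_E=r_I=0$. Let $S_E,S_I:\mathbb{R}\to\mathbb{R}$ be bounded Lipschitz functions with $S_E(0)=S_I(0)=0$, let $w_{EE},w_{EI},w_{IE},w_{II}\in\mathcal{C}(\mathbb{Z}_p)$ and $h_E,h_I\in\mathcal{C}([0,\infty),\mathcal{C}(\mathbb{Z}_p))$. Let $\mathcal{X}=\mathcal{C}(\mathbb{Z}_p)\times\mathcal{C}(\mathbb{Z}_p)$ with norm $\|(f_1,f_2)\|=\max\{\|f_1\|_\infty,\|f_2\|_\infty\}$ and, for $f=(f_1,f_2)\in\mathcal{X}$ and $s\ge0$, $$\boldsymbol{H}(f,s)=\Big(S_E\big(w_{EE}\ast f_1-w_{EI}\ast f_2+h_E(\cdot,s)\big),\ S_I\big(w_{IE}\ast f_1-w_{II}\ast f_2+h_I(\cdot,s)\big)\Big).$$ Let $(E_0,I_0)\in\mathcal{X}$ and let $u(t)=(E(\cdot,t),I(\cdot,t))\in\mathcal{C}^1([0,\infty),\mathcal{X})$ be the unique solution of $$\partial_tu+\tfrac1\tau u=\tfrac1\tau\boldsymbol{H}(u,t),\qquad u(0)=(E_0,I_0).$$ For $l\ge1$ let $u_l(t)=(E_l(\cdot,t),I_l(\cdot,t))$ be the unique solution in $\mathcal{C}^1([0,\infty),\mathcal{X}_l)$ of the discretized problem $$\partial_tu_l+\tfrac1\tau u_l=\tfrac1\tau\boldsymbol{P}_l\big(\boldsymbol{H}(u_l,t)\big),\qquad u_l(0)=\boldsymbol{P}_l(E_0,I_0).$$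 Then for every $T\in(0,\infty)$, $$\lim_{l\to\infty}\sup_{0\le t\le T}\|u_l(t)-u(t)\|=0.$$
   Context: $\mathbb{Z}_p$ is the ring of $p$-adic integers with $p$-adic absolute value $|\cdot|_p$; it is a compact Abelian group and $dx$ is its Haar measure normalized by $\int_{\mathbb{Z}_p}dx=1$. $\mathcal{C}(\mathbb{Z}_p)$ is the space of real-valued continuous functions on $\mathbb{Z}_p$ with sup norm $\|\cdot\|_\infty$. Convolution: $(w\ast f)(x)=\int_{\mathbb{Z}_p}w(x-y)f(y)\,dx(y)$. $\Omega(p^l|x-a|_p)$ denotes the characteristic function of the ball $a+p^l\mathbb{Z}_p$. $G_l=\{i_0+i_1p+\dots+i_{l-1}p^{l-1}:i_j\in\{0,\dots,p-1\}\}$ is a set of representatives of $\mathbb{Z}_p/p^l\mathbb{Z}_p$. $\mathcal{D}^l(\mathbb{Z}_p)$ is the finite-dimensional space of functions $\sum_{i\in G_l}\varphi(i)\Omega(p^l|x-i|_p)$, $\varphi(i)\in\mathbb{R}$, and $\mathcal{X}_l=\mathcal{D}^l(\mathbb{Z}_p)\times\mathcal{D}^l(\mathbb{Z}_p)\subset\mathcal{X}$ with the same norm. The operator $\boldsymbol{P}_l:\mathcal{X}\to\mathcal{X}_l$ acts componentwise by $(\boldsymbol{P}_lf)(x)=\sum_{i\in G_l}f(i)\,\Omega(p^l|x-i|_p)$. *)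

(* Defs.v *)
From Stdlib Require Import Reals ZArith Lia Znumtheory.
From Coquelicot Require Import Coquelicot.

Definition pmod (p n : nat) : Z := (Z.of_nat p ^ Z.of_nat n)%Z.

(* An element x of Z_p is represented by its residues x_n = x mod p^n,
   0 <= x_n < p^n, with x_{n+1} mod p^n = x_n (inverse limit of Z/p^nZ). *)
Record Zp (p : nat) := mkZp {
  zp_seq : nat -> Z;
  zp_range : forall n, (0 <= zp_seq n < pmod p n)%Z;
  zp_compat : forall n, (zp_seq (S n) mod pmod p n = zp_seq n)%Z }.
Arguments zp_seq {p} _ _.

Lemma pmod_S p n : pmod p (S n) = (pmod p n * Z.of_nat p)%Z.
Proof.
  unfold pmod. rewrite Nat2Z.inj_succ, Z.pow_succ_r by lia. ring.
Qed.

Lemma zp_sub_range p (x y : Zp p) n :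
  (0 <= (zp_seq x n - zp_seq y n) mod pmod p n < pmod p n)%Z.
Proof.
  pose proof (zp_range p x n). apply Z.mod_pos_bound. lia.
Qed.

Lemma zp_sub_compat p (x y : Zp p) n :
  (((zp_seq x (S n) - zp_seq y (S n)) mod pmod p (S n)) mod pmod p n
    = (zp_seq x n - zp_seq y n) mod pmod p n)%Z.
Proof.
  pose proof (zp_range p x n) as Hn.
  pose proof (zp_range p x (S n)) as HSn.
  rewrite <- Zmod_div_mod; try lia.
  - rewrite Zminus_mod, !zp_compat. reflexivity.
  - exists (Z.of_nat p). rewrite pmod_S. ring.
Qed.

Definition zp_sub {p} (x y : Zp p) : Zp p :=
  mkZp p (fun n => ((zp_seq x n - zp_seq y n) mod pmod p n)%Z)
       (zp_sub_range p x y) (zp_sub_compat p x y).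

Lemma prime_pmod_pos p (Hp : prime (Z.of_nat p)) n : (0 < pmod p n)%Z.
Proof.
  destruct Hp as [H1 _]. unfold pmod. apply Z.pow_pos_nonneg; lia.
Qed.

Lemma zp_nat_range p (Hp : prime (Z.of_nat p)) (i : nat) n :
  (0 <= Z.of_nat i mod pmod p n < pmod p n)%Z.
Proof. apply Z.mod_pos_bound, prime_pmod_pos, Hp. Qed.

Lemma zp_nat_compat p (Hp : prime (Z.of_nat p)) (i : nat) n :
  ((Z.of_nat i mod pmod p (S n)) mod pmod p n = Z.of_nat i mod pmod p n)%Z.
Proof.
  pose proof (prime_pmod_pos p Hp n). pose proof (prime_pmod_pos p Hp (S n)).
  rewrite <- Zmod_div_mod; try lia.
  exists (Z.of_nat p). rewrite pmod_S. ring.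
Qed.

Definition zp_of_nat p (Hp : prime (Z.of_nat p)) (i : nat) : Zp p :=
  mkZp p (fun n => (Z.of_nat i mod pmod p n)%Z)
       (zp_nat_range p Hp i) (zp_nat_compat p Hp i).

(* x belongs to the ball a + p^l Z_p, i.e. |x - a|_p <= p^{-l} *)
Definition in_ball {p} (l : nat) (a x : Zp p) : Prop := zp_seq x l = zp_seq a l.

(* Omega(p^l |x - a|_p) : characteristic function of the ball a + p^l Z_p *)
Definition Omega {p} (l : nat) (a x : Zp p) : R :=
  if Z.eq_dec (zp_seq x l) (zp_seq a l) then 1%R else 0%R.

Fixpoint rsum (f : nat -> R) (n : nat) : R :=
  match n with O => 0%R | S k => (rsum f k + f k)%R end.

Open Scope R_scope.

Definition cont_Zp {p} (f : Zp p -> R) : Prop :=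
  forall x eps, 0 < eps -> exists l : nat,
    forall y, in_ball l x y -> Rabs (f y - f x) < eps.

(* Integral against the normalized Haar measure dx on Z_p (mu(a+p^l Z_p) = p^{-l}),
   for continuous f: the limit of the Riemann sums over G_l = {0,...,p^l-1}. *)
Definition haar_int p (Hp : prime (Z.of_nat p)) (f : Zp p -> R) : R :=
  real (Lim_seq (fun l => rsum (fun i => f (zp_of_nat p Hp i)) (p ^ l) / INR (p ^ l))).

Definition conv p (Hp : prime (Z.of_nat p)) (w f : Zp p -> R) (x : Zp p) : R :=
  haar_int p Hp (fun y => w (zp_sub x y) * f y).

Definition in_Dl p (Hp : prime (Z.of_nat p)) (l : nat) (f : Zp p -> R) : Prop :=
  exists phi : nat -> R, forall x,
    f x = rsum (fun i => phi i * Omega l (zp_of_nat p Hp i) x) (p ^ l).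

Definition Pl p (Hp : prime (Z.of_nat p)) (l : nat) (f : Zp p -> R) (x : Zp p) : R :=
  rsum (fun i => f (zp_of_nat p Hp i) * Omega l (zp_of_nat p Hp i) x) (p ^ l).

Definition unif_close {p} (f g : Zp p -> R) (eps : R) : Prop :=
  forall x, Rabs (f x - g x) <= eps.

Definition bounded_lipschitz (S : R -> R) : Prop :=
  (exists M, forall a, Rabs (S a) <= M) /\
  (exists L, forall a b, Rabs (S a - S b) <= L * Rabs (a - b)).

(* h in C([0,oo), C(Z_p)) ; h s is h(., s) *)
Definition cont_time_CZp {p} (h : R -> Zp p -> R) : Prop :=
  (forall s, 0 <= s -> cont_Zp (h s)) /\
  (forall s eps, 0 <= s -> 0 < eps -> exists delta, 0 < delta /\
     forall s', 0 <= s' -> Rabs (s' - s) < delta -> unif_close (h s') (h s) eps).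

(* u = (E, I) in C^1([0,oo), X) with derivative (E', I'), X = C(Z_p) x C(Z_p)
   with the max of the sup norms (one-sided derivative at t = 0). *)
Definition C1_X {p} (E I E' I' : R -> Zp p -> R) : Prop :=
  (forall t, 0 <= t -> cont_Zp (E t) /\ cont_Zp (I t) /\
                       cont_Zp (E' t) /\ cont_Zp (I' t)) /\
  (forall t eps, 0 <= t -> 0 < eps -> exists delta, 0 < delta /\
     forall s, 0 <= s -> s <> t -> Rabs (s - t) < delta ->
       unif_close (fun x => (E s x - E t x) / (s - t)) (E' t) eps /\
       unif_close (fun x => (I s x - I t x) / (s - t)) (I' t) eps) /\
  (forall t eps, 0 <= t -> 0 < eps -> exists delta, 0 < delta /\
     forall s, 0 <= s -> Rabs (s - t) < delta ->
       unif_close (E' s) (E' t) eps /\ unif_close (I' s) (I' t) eps).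

Definition H_E p (Hp : prime (Z.of_nat p)) (SE : R -> R) (wEE wEI : Zp p -> R)
  (hE : R -> Zp p -> R) (f1 f2 : Zp p -> R) (s : R) (x : Zp p) : R :=
  SE (conv p Hp wEE f1 x - conv p Hp wEI f2 x + hE s x).

Definition H_I p (Hp : prime (Z.of_nat p)) (SI : R -> R) (wIE wII : Zp p -> R)
  (hI : R -> Zp p -> R) (f1 f2 : Zp p -> R) (s : R) (x : Zp p) : R :=
  SI (conv p Hp wIE f1 x - conv p Hp wII f2 x + hI s x).

Definition is_solution p (Hp : prime (Z.of_nat p)) (tau : R) (SE SI : R -> R)
  (wEE wEI wIE wII : Zp p -> R) (hE hI : R -> Zp p -> R) (E0 I0 : Zp p -> R)
  (E I : R -> Zp p -> R) : Prop :=
  exists E' I' : R -> Zp p -> R,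
    C1_X E I E' I' /\
    (forall x, E 0 x = E0 x) /\ (forall x, I 0 x = I0 x) /\
    (forall t x, 0 <= t ->
       E' t x + E t x / tau = H_E p Hp SE wEE wEI hE (E t) (I t) t x / tau /\
       I' t x + I t x / tau = H_I p Hp SI wIE wII hI (E t) (I t) t x / tau).

Definition is_disc_solution p (Hp : prime (Z.of_nat p)) (l : nat) (tau : R) (SE SI : R -> R)
  (wEE wEI wIE wII : Zp p -> R) (hE hI : R -> Zp p -> R) (E0 I0 : Zp p -> R)
  (E I : R -> Zp p -> R) : Prop :=
  exists E' I' : R -> Zp p -> R,
    C1_X E I E' I' /\
    (forall t, 0 <= t -> in_Dl p Hp l (E t) /\ in_Dl p Hp l (I t) /\
                         in_Dl p Hp l (E' t) /\ in_Dl p Hp l (I' t)) /\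
    (forall x, E 0 x = Pl p Hp l E0 x) /\ (forall x, I 0 x = Pl p Hp l I0 x) /\
    (forall t x, 0 <= t ->
       E' t x + E t x / tau = Pl p Hp l (H_E p Hp SE wEE wEI hE (E t) (I t) t) x / tau /\
       I' t x + I t x / tau = Pl p Hp l (H_I p Hp SI wIE wII hI (E t) (I t) t) x / tau).

(* Main.v *)
Require Import Defs.
From Stdlib Require Import Reals ZArith Znumtheory Lia Lra Psatz.
From Stdlib Require Import Classical ClassicalEpsilon.
From Coquelicot Require Import Coquelicot.
Open Scope R_scope.

Ltac rabs := unfold Rabs in *; repeat match goal with
  | |- context[Rcase_abs ?x] => destruct (Rcase_abs x)
  | H: context[Rcase_abs ?x] |- _ => destruct (Rcase_abs x) end; lra.



Lemma pmod_nat (p : nat) n : pmod p n = Z.of_nat (p ^ n).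
Proof. unfold pmod. rewrite Nat2Z.inj_pow. reflexivity. Qed.

Lemma p_ge2 p (Hp : prime (Z.of_nat p)) : (2 <= p)%nat.
Proof. destruct Hp as [H _]. lia. Qed.

Lemma zp_seq_le p (Hp : prime (Z.of_nat p)) (x : Zp p) k m : (k <= m)%nat ->
  zp_seq x k = (zp_seq x m mod pmod p k)%Z.
Proof.
  intros H. induction H.
  - pose proof (zp_range p x k). rewrite Z.mod_small; lia.
  - rewrite IHle. rewrite <- (zp_compat p x m).
    pose proof (prime_pmod_pos p Hp k). pose proof (prime_pmod_pos p Hp m).
    rewrite <- Zmod_div_mod; try lia.
    rewrite !pmod_nat. exists (Z.of_nat (p ^ (m - k))).
    rewrite <- Nat2Z.inj_mul, <- Nat.pow_add_r. f_equal. f_equal. lia.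
Qed.

Lemma in_ball_mono p (Hp : prime (Z.of_nat p)) (x y : Zp p) k m : (k <= m)%nat -> in_ball m x y -> in_ball k x y.
Proof.
  unfold in_ball. intros H E. rewrite (zp_seq_le p Hp x k m H), (zp_seq_le p Hp y k m H), E. reflexivity.
Qed.

Lemma in_ball_sym p (x y : Zp p) m : in_ball m x y -> in_ball m y x.
Proof. unfold in_ball. auto. Qed.

Lemma in_ball_trans p (x y z : Zp p) m : in_ball m x y -> in_ball m y z -> in_ball m x z.
Proof. unfold in_ball. intros; congruence. Qed.

Lemma in_ball_sub p (x x' y : Zp p) m : in_ball m x x' -> in_ball m (zp_sub x y) (zp_sub x' y).
Proof. unfold in_ball, zp_sub. simpl. intros E. rewrite E. reflexivity. Qed.

Definition rep p (Hp : prime (Z.of_nat p)) (l : nat) (x : Zp p) : Zp p := zp_of_nat p Hp (Z.to_nat (zp_seq x l)).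

Lemma rep_in_ball p Hp l (x : Zp p) : in_ball l x (rep p Hp l x).
Proof.
  unfold in_ball, rep, zp_of_nat. simpl. pose proof (zp_range p x l).
  rewrite Z2Nat.id by lia. rewrite Z.mod_small; lia.
Qed.

Lemma rsum_single (g : nat -> R) n k : (k < n)%nat ->
  (forall i, (i < n)%nat -> i <> k -> g i = 0) -> rsum g n = g k.
Proof.
  induction n; intros Hk Hg; [lia|]. simpl.
  destruct (Nat.eq_dec k n) as [->|Hne].
  - assert (rsum g n = 0).
    { clear IHn Hk. assert (forall j, (j <= n)%nat -> rsum g j = 0).
      { induction j; intros; simpl; [reflexivity|]. rewrite IHj by lia. rewrite Hg by lia. ring. }
      apply H; lia. }
    rewrite H. ring.
  - rewrite IHn by (auto; lia). rewrite (Hg n) by lia. ring.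
Qed.

Lemma Pl_rep p Hp l f (x : Zp p) : Pl p Hp l f x = f (rep p Hp l x).
Proof.
  unfold Pl. pose proof (zp_range p x l) as Hr. rewrite pmod_nat in Hr.
  rewrite (rsum_single _ _ (Z.to_nat (zp_seq x l))).
  - unfold Omega, zp_of_nat at 2. simpl. rewrite Z2Nat.id by lia.
    rewrite pmod_nat, Z.mod_small by lia.
    destruct (Z.eq_dec (zp_seq x l) (zp_seq x l)); [|congruence]. unfold rep. ring.
  - lia.
  - intros i Hi Hne. unfold Omega, zp_of_nat. simpl.
    rewrite pmod_nat, Z.mod_small by lia.
    destruct (Z.eq_dec (zp_seq x l) (Z.of_nat i)); [lia|ring].
Qed.




Lemma fin_max (P : nat -> nat -> Prop) N :
  (forall k M M', P k M -> (M <= M')%nat -> P k M') ->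
  (forall k, (k < N)%nat -> exists M, P k M) -> exists M, forall k, (k < N)%nat -> P k M.
Proof.
  intros Hm. induction N; intros H.
  - exists 0%nat. intros; lia.
  - destruct IHN as [M1 HM1]. { intros; apply H; lia. }
    destruct (H N) as [M2 HM2]; [lia|].
    exists (Nat.max M1 M2). intros k Hk.
    destruct (Nat.eq_dec k N) as [->|].
    + apply (Hm _ M2); [auto|lia].
    + apply (Hm _ M1); [apply HM1; lia|lia].
Qed.

Definition badb p (f : Zp p -> R) eps n r : Prop :=
  forall m, (n <= m)%nat -> exists x y : Zp p,
    zp_seq x n = r /\ in_ball m x y /\ eps < Rabs (f x - f y).

Lemma bad_step p (Hp : prime (Z.of_nat p)) f eps n r : badb p f eps n r ->
  exists k, (0 <= k < pmod p (S n))%Z /\ (k mod pmod p n = r)%Z /\ badb p f eps (S n) k.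
Proof.
  intros Hb. apply NNPP. intros Hc.
  set (P := fun k M => forall m, (M <= m)%nat -> forall x y : Zp p,
     zp_seq x (S n) = Z.of_nat k -> zp_seq x n = r -> in_ball m x y -> Rabs (f x - f y) <= eps).
  destruct (fin_max P (p ^ S n)) as [M HM].
  - intros k M M' HP HMM m Hm. apply HP. lia.
  - intros k Hk. destruct (classic (badb p f eps (S n) (Z.of_nat k))) as [Hbk|Hbk].
    + exists 0%nat. intros m _ x y Hx Hxn _. exfalso. apply Hc. exists (Z.of_nat k).
      split; [rewrite pmod_nat; lia|]. split; [|auto].
      rewrite <- Hx, <- Hxn. symmetry. apply (zp_seq_le p Hp). lia.
    + unfold badb in Hbk. apply not_all_ex_not in Hbk. destruct Hbk as [m0 Hm0].
      apply imply_to_and in Hm0. destruct Hm0 as [Hm0 Hne].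
      exists m0. intros m Hm x y Hx _ Hxy. apply Rnot_lt_le. intro Hlt. apply Hne.
      exists x, y. split; [auto|]. split; [|auto]. apply (in_ball_mono p Hp _ _ _ m); auto.
  - destruct (Hb (Nat.max M (S n))) as (x & y & Hx & Hxy & Hgt); [lia|].
    pose proof (zp_range p x (S n)) as Hr. rewrite pmod_nat in Hr.
    assert (Hk: (Z.to_nat (zp_seq x (S n)) < p ^ S n)%nat) by lia.
    specialize (HM _ Hk (Nat.max M (S n)) ltac:(lia) x y). 
    rewrite Z2Nat.id in HM by lia. specialize (HM eq_refl Hx Hxy). lra.
Qed.

Lemma step_ex p (Hp : prime (Z.of_nat p)) f eps n r : exists k, badb p f eps n r ->
  (0 <= k < pmod p (S n))%Z /\ (k mod pmod p n = r)%Z /\ badb p f eps (S n) k.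
Proof.
  destruct (classic (badb p f eps n r)) as [H|H].
  - destruct (bad_step p Hp f eps n r H) as [k Hk]. exists k. auto.
  - exists 0%Z. tauto.
Qed.

Definition gch p Hp f eps n r : Z :=
  proj1_sig (constructive_indefinite_description _ (step_ex p Hp f eps n r)).

Lemma gch_spec p Hp f eps n r : badb p f eps n r ->
  (0 <= gch p Hp f eps n r < pmod p (S n))%Z /\ (gch p Hp f eps n r mod pmod p n = r)%Z /\
  badb p f eps (S n) (gch p Hp f eps n r).
Proof. unfold gch. destruct constructive_indefinite_description. simpl. auto. Qed.

Fixpoint zs p Hp f eps n : Z :=
  match n with O => 0%Z | S n => gch p Hp f eps n (zs p Hp f eps n) end.

Lemma unif_cont p (Hp : prime (Z.of_nat p)) (f : Zp p -> R) : cont_Zp f ->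
  forall eps, 0 < eps -> exists m, forall x y, in_ball m x y -> Rabs (f x - f y) <= eps.
Proof.
  intros Hf eps Heps. apply NNPP. intros Hn.
  assert (Hb0 : badb p f eps 0 0%Z).
  { intros m _. apply NNPP. intros H2. apply Hn. exists m. intros x y Hb.
    apply Rnot_lt_le. intro. apply H2. exists x, y. repeat split; auto.
    pose proof (zp_range p x 0). unfold pmod in H0. simpl in H0. lia. }
  assert (Hbad : forall n, badb p f eps n (zs p Hp f eps n)).
  { induction n; [exact Hb0|]. simpl. apply gch_spec. auto. }
  assert (Hrange : forall n, (0 <= zs p Hp f eps n < pmod p n)%Z).
  { destruct n; [unfold pmod; simpl; lia|]. simpl. apply gch_spec. auto. }
  assert (Hcomp : forall n, (zs p Hp f eps (S n) mod pmod p n = zs p Hp f eps n)%Z).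
  { intros n. simpl. apply gch_spec. auto. }
  set (z := mkZp p (zs p Hp f eps) Hrange Hcomp).
  destruct (Hf z (eps/2) ltac:(lra)) as [l Hl].
  destruct (Hbad l l (le_n l)) as (x & y & Hx & Hxy & Hgt).
  assert (Bx : in_ball l z x) by (unfold in_ball; simpl; auto).
  assert (By : in_ball l z y) by (eapply in_ball_trans; eauto).
  pose proof (Hl x Bx). pose proof (Hl y By).
  revert H H0 Hgt. generalize (f x) (f y) (f z). intros a b c. rabs.
Qed.


Lemma LimSup_fin (u : nat -> R) B : (forall n, Rabs (u n) <= B) ->
  exists l, LimSup_seq u = Finite l.
Proof.
  intros H. assert (H1 : Rbar_le (LimSup_seq u) (LimSup_seq (fun _ => B))).
  { apply LimSup_le. exists 0%nat. intros n _. specialize (H n). rabs. }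
  assert (H2 : Rbar_le (LimSup_seq (fun _ => -B)) (LimSup_seq u)).
  { apply LimSup_le. exists 0%nat. intros n _. specialize (H n). rabs. }
  rewrite LimSup_seq_const in H1, H2.
  destruct (LimSup_seq u); simpl in *; try contradiction. eauto.
Qed.

Lemma LimInf_fin (u : nat -> R) B : (forall n, Rabs (u n) <= B) ->
  exists l, LimInf_seq u = Finite l.
Proof.
  intros H. assert (H1 : Rbar_le (LimInf_seq u) (LimInf_seq (fun _ => B))).
  { apply LimInf_le. exists 0%nat. intros n _. specialize (H n). rabs. }
  assert (H2 : Rbar_le (LimInf_seq (fun _ => -B)) (LimInf_seq u)).
  { apply LimInf_le. exists 0%nat. intros n _. specialize (H n). rabs. }
  rewrite LimInf_seq_const in H1, H2.
  destruct (LimInf_seq u); simpl in *; try contradiction. eauto.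
Qed.

Lemma LimSup_shift (u : nat -> R) l M : LimSup_seq u = Finite l ->
  LimSup_seq (fun n => u n + M) = Finite (l + M).
Proof.
  intros H. apply is_LimSup_seq_unique.
  pose proof (proj2_sig (ex_LimSup_seq u)) as C. fold (LimSup_seq u) in C. rewrite H in C. simpl in *.
  intros e. destruct (C e) as [C1 [N C2]]. split.
  - intros N'. destruct (C1 N') as [n [Hn Hl]]. exists n. split; auto. lra.
  - exists N. intros n Hn. specialize (C2 n Hn). lra.
Qed.

Lemma LimInf_shift (u : nat -> R) l M : LimInf_seq u = Finite l ->
  LimInf_seq (fun n => u n + M) = Finite (l + M).
Proof.
  intros H. apply is_LimInf_seq_unique.
  pose proof (proj2_sig (ex_LimInf_seq u)) as C. fold (LimInf_seq u) in C. rewrite H in C. simpl in *.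
  intros e. destruct (C e) as [C1 [N C2]]. split.
  - intros N'. destruct (C1 N') as [n [Hn Hl]]. exists n. split; auto. lra.
  - exists N. intros n Hn. specialize (C2 n Hn). lra.
Qed.

Lemma Lim_seq_diff (a b : nat -> R) B M : (forall n, Rabs (a n) <= B) ->
  (forall n, Rabs (a n - b n) <= M) ->
  Rabs (real (Lim_seq a) - real (Lim_seq b)) <= M.
Proof.
  intros Ha Hab.
  assert (Hb : forall n, Rabs (b n) <= B + M).
  { intros n. specialize (Ha n). specialize (Hab n). rabs. }
  destruct (LimSup_fin a B Ha) as [sa Hsa].
  destruct (LimInf_fin a B Ha) as [ia Hia].
  destruct (LimSup_fin b _ Hb) as [sb Hsb].
  destruct (LimInf_fin b _ Hb) as [ib Hib].
  assert (E1 : Rbar_le (LimSup_seq b) (LimSup_seq (fun n => a n + M))).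
  { apply LimSup_le. exists 0%nat. intros n _. specialize (Hab n). rabs. }
  assert (E2 : Rbar_le (LimSup_seq a) (LimSup_seq (fun n => b n + M))).
  { apply LimSup_le. exists 0%nat. intros n _. specialize (Hab n). rabs. }
  assert (E3 : Rbar_le (LimInf_seq b) (LimInf_seq (fun n => a n + M))).
  { apply LimInf_le. exists 0%nat. intros n _. specialize (Hab n). rabs. }
  assert (E4 : Rbar_le (LimInf_seq a) (LimInf_seq (fun n => b n + M))).
  { apply LimInf_le. exists 0%nat. intros n _. specialize (Hab n). rabs. }
  rewrite (LimSup_shift _ _ _ Hsa), Hsb in E1.
  rewrite (LimSup_shift _ _ _ Hsb), Hsa in E2.
  rewrite (LimInf_shift _ _ _ Hia), Hib in E3.
  rewrite (LimInf_shift _ _ _ Hib), Hia in E4.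
  simpl in E1, E2, E3, E4.
  unfold Lim_seq. rewrite Hsa, Hia, Hsb, Hib. simpl. rabs.
Qed.

Lemma rsum_diff (g h : nat -> R) n M : (forall i, Rabs (g i - h i) <= M) ->
  Rabs (rsum g n - rsum h n) <= INR n * M.
Proof.
  intros H. induction n.
  - simpl. rewrite Rminus_0_r, Rabs_R0. lra.
  - rewrite S_INR. simpl rsum. specialize (H n). rabs.
Qed.

Lemma haar_diff p (Hp : prime (Z.of_nat p)) (F G : Zp p -> R) B D : (forall y, Rabs (F y) <= B) ->
  (forall y, Rabs (F y - G y) <= D) ->
  Rabs (haar_int p Hp F - haar_int p Hp G) <= D.
Proof.
  intros HF HFG. unfold haar_int. apply Lim_seq_diff with (B := B).
  - intros l. assert (Hpos : 0 < INR (p ^ l)).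
    { apply lt_0_INR. pose proof (p_ge2 p Hp). apply Nat.neq_0_lt_0, Nat.pow_nonzero. lia. }
    pose proof (rsum_diff (fun i => F (zp_of_nat p Hp i)) (fun _ => 0) (p ^ l) B) as R1.
    assert (Z0 : forall n, rsum (fun _ => 0) n = 0).
    { induction n; simpl; [reflexivity|rewrite IHn; ring]. }
    rewrite Z0, Rminus_0_r in R1 by (intros i; rewrite Rminus_0_r; apply HF).
    unfold Rdiv. rewrite Rabs_mult, Rabs_inv, (Rabs_right (INR _)) by lra.
    apply Rmult_le_reg_r with (INR (p ^ l)); auto.
    rewrite Rmult_assoc, Rinv_l by lra. rewrite Rmult_1_r, Rmult_comm. apply R1.
    intros i. rewrite Rminus_0_r. apply HF.
  - intros l. assert (Hpos : 0 < INR (p ^ l)).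
    { apply lt_0_INR. pose proof (p_ge2 p Hp). apply Nat.neq_0_lt_0, Nat.pow_nonzero. lia. }
    pose proof (rsum_diff (fun i => F (zp_of_nat p Hp i)) (fun i => G (zp_of_nat p Hp i)) (p ^ l) D) as R1.
    unfold Rdiv. rewrite <- Rmult_minus_distr_r.
    rewrite Rabs_mult, Rabs_inv, (Rabs_right (INR _)) by lra.
    apply Rmult_le_reg_r with (INR (p ^ l)); auto.
    rewrite Rmult_assoc, Rinv_l by lra. rewrite Rmult_1_r, Rmult_comm. apply R1.
    intros i. apply HFG.
Qed.

Lemma rsum_term (g : nat -> R) n k : (forall i, 0 <= g i) -> (k < n)%nat -> g k <= rsum g n.
Proof.
  intros H. induction n; intros Hk; [lia|]. simpl.
  assert (0 <= rsum g n). { clear IHn Hk. induction n; simpl; [lra|]. specialize (H n). lra. }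
  destruct (Nat.eq_dec k n) as [->|]. lra. specialize (IHn ltac:(lia)). specialize (H n). lra.
Qed.

Lemma cont_bounded p (Hp : prime (Z.of_nat p)) (f : Zp p -> R) : cont_Zp f -> exists B, 0 <= B /\ forall x, Rabs (f x) <= B.
Proof.
  intros Hf. destruct (unif_cont p Hp f Hf 1 ltac:(lra)) as [m Hm].
  exists (rsum (fun i => Rabs (f (zp_of_nat p Hp i))) (p ^ m) + 1).
  assert (Hk : forall x : Zp p, Rabs (f x) <= rsum (fun i => Rabs (f (zp_of_nat p Hp i))) (p ^ m) + 1).
  { intros x. specialize (Hm _ _ (rep_in_ball p Hp m x)).
    pose proof (rsum_term (fun i => Rabs (f (zp_of_nat p Hp i))) (p ^ m) (Z.to_nat (zp_seq x m))) as T.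
    simpl in T. assert (Rabs (f (rep p Hp m x)) <= rsum (fun i => Rabs (f (zp_of_nat p Hp i))) (p ^ m)).
    { apply T. intros; apply Rabs_pos. pose proof (zp_range p x m). rewrite pmod_nat in H. lia. }
    revert Hm H. generalize (f x) (f (rep p Hp m x)). intros. rabs. }
  split; [|exact Hk]. pose proof (Hk (zp_of_nat p Hp 0)). pose proof (Rabs_pos (f (zp_of_nat p Hp 0))). lra.
Qed.


Lemma real_ind (T : R) (Q : R -> Prop) : 0 <= T ->
  (forall t, 0 <= t <= T -> (forall s, 0 <= s < t -> Q s) ->
     exists d, 0 < d /\ forall s, 0 <= s < t + d -> Q s) ->
  forall t, 0 <= t <= T -> Q t.
Proof.
  intros HT Hstep.
  set (Ei := fun x => x <= T /\ forall s, 0 <= s < x -> Q s).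
  assert (Hb : bound Ei). { exists T. intros x [H _]. auto. }
  assert (He : exists x, Ei x). { exists 0. split; auto. intros; lra. }
  destruct (completeness Ei Hb He) as [m [Hub Hlub]].
  assert (Hm0 : 0 <= m). { apply Hub. split; auto. intros; lra. }
  assert (HmT : m <= T). { apply Hlub. intros x [H _]. auto. }
  assert (Hbel : forall s, 0 <= s < m -> Q s).
  { intros s Hs. apply NNPP. intros Hn.
    assert (m <= s). { apply Hlub. intros x [_ Hx]. apply Rnot_lt_le. intro Hlt. apply Hn. apply Hx. lra. }
    lra. }
  destruct (Hstep m (conj Hm0 HmT) Hbel) as [d [Hd Hq]].
  destruct (Rlt_or_le m T) as [Hlt|Hge].
  - exfalso. assert (Ei (Rmin (m + d/2) T)).
    { split; [apply Rmin_r|]. intros s Hs. apply Hq. split; [lra|].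
      pose proof (Rmin_l (m + d/2) T). lra. }
    apply Hub in H. unfold Rmin in H. destruct (Rle_dec (m + d/2) T); lra.
  - intros t Ht. apply Hq. lra.
Qed.

Lemma exp_mono x y : x <= y -> exp x <= exp y.
Proof. intros [H|H]; [left; apply exp_increasing; auto|subst; lra]. Qed.

Lemma barrier (J : Type) (tau T a b c K : R) (e e' A : R -> J -> R) :
  0 < tau -> 0 <= K -> 0 < c -> b < 2 * c -> a <= c -> 0 <= T ->
  (forall j, Rabs (e 0 j) <= a) ->
  (forall t, 0 <= t <= T -> forall eta, 0 < eta -> exists d, 0 < d /\
     forall s, 0 <= s -> Rabs (s - t) < d -> forall j,
       Rabs (e s j - e t j - (s - t) * e' t j) <= eta * Rabs (s - t)) ->
  (forall t j, 0 <= t <= T -> e' t j = (- e t j + A t j) / tau) ->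
  (forall t, 0 <= t <= T -> (forall j, Rabs (e t j) <= c * exp ((K + 1) / tau * t)) ->
     forall j, Rabs (A t j) <= K * (c * exp ((K + 1) / tau * t)) + b) ->
  forall t, 0 <= t <= T -> forall j, Rabs (e t j) <= c * exp ((K + 1) / tau * t).
Proof.
  intros Htau HK Hc Hbc Hac HT H0 Hder Heq HA.
  set (lam := (K + 1) / tau).
  assert (Hlam : 0 < lam). { unfold lam. apply Rdiv_lt_0_compat; lra. }
  apply (real_ind T (fun t => forall j, Rabs (e t j) <= c * exp (lam * t)) HT).
  intros t Ht Hprev.
  assert (Qt : forall j, Rabs (e t j) <= c * exp (lam * t)).
  { intros j. destruct (Req_dec t 0) as [->|Ht0].
    - rewrite Rmult_0_r, exp_0. specialize (H0 j). lra.
    - apply Rnot_lt_le. intros Hgt.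
      set (d0 := Rabs (e t j) - c * exp (lam * t)).
      destruct (Hder t Ht 1 ltac:(lra)) as [d1 [Hd1 Hd]].
      set (M := Rabs (e' t j) + 1).
      assert (HM : 0 < M) by (unfold M; pose proof (Rabs_pos (e' t j)); lra).
      set (h := Rmin (Rmin t d1) (d0 / M) / 2).
      assert (Hh0 : 0 < h).
      { unfold h. apply Rdiv_lt_0_compat; [|lra]. apply Rmin_pos; [apply Rmin_pos|]; try lra.
        apply Rdiv_lt_0_compat; unfold d0; lra. }
      assert (Hh1 : h < t) by (unfold h; pose proof (Rmin_l (Rmin t d1) (d0/M)); pose proof (Rmin_l t d1); lra).
      assert (Hh2 : h < d1) by (unfold h; pose proof (Rmin_l (Rmin t d1) (d0/M)); pose proof (Rmin_r t d1); lra).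
      assert (Hh3 : h * M < d0).
      { assert (h < d0 / M) by (unfold h; pose proof (Rmin_r (Rmin t d1) (d0/M));
          assert (0 < d0 / M) by (apply Rdiv_lt_0_compat; unfold d0; lra); lra).
        apply (Rmult_lt_compat_r M) in H; auto. unfold Rdiv in H. rewrite Rmult_assoc, Rinv_l in H; lra. }
      assert (Hs : 0 <= t - h) by lra.
      assert (Habs : Rabs (t - h - t) = h) by (replace (t - h - t) with (-h) by ring; rewrite Rabs_Ropp; apply Rabs_right; lra).
      specialize (Hd (t - h) Hs ltac:(lra) j). rewrite Habs in Hd.
      specialize (Hprev (t - h) ltac:(lra) j).
      assert (exp (lam * (t - h)) <= exp (lam * t)) by (apply exp_mono; nra).
      assert (Rabs ((t - h - t) * e' t j) = h * Rabs (e' t j)) by (rewrite Rabs_mult, Habs; auto).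
      assert (Rabs (e t j) <= Rabs (e (t - h) j) + h * M).
      { unfold M. revert Hd H1. generalize (e (t-h) j) (e t j) ((t - h - t) * e' t j). intros u v w.
        intros. assert (Rabs w = h * Rabs (e' t j)) by auto. rewrite Rmult_plus_distr_l, Rmult_1_r. rabs. }
      unfold d0 in Hh3. nra. }
  set (eta := (2 * c - b) / tau).
  assert (Heta : 0 < eta) by (unfold eta; apply Rdiv_lt_0_compat; lra).
  destruct (Hder t Ht eta Heta) as [d [Hd Hdd]].
  exists (Rmin d tau). split; [apply Rmin_pos; lra|].
  intros s [Hs0 Hs1] j.
  destruct (Rtotal_order s t) as [Hlt|[->|Hgt]].
  - apply Hprev; lra.
  - apply Qt.
  - set (h := s - t). set (q := h / tau).
    assert (Hh : 0 < h) by (unfold h; lra).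
    assert (Hhd : h < d) by (unfold h; pose proof (Rmin_l d tau); lra).
    assert (Hht : h < tau) by (unfold h; pose proof (Rmin_r d tau); lra).
    assert (Habs : Rabs (s - t) = h) by (apply Rabs_right; unfold h; lra).
    specialize (Hdd s Hs0 ltac:(lra) j). rewrite Habs in Hdd.
    set (P := c * exp (lam * t)).
    assert (HP : c <= P). { unfold P. assert (1 <= exp (lam * t)). { rewrite <- exp_0. apply exp_mono. nra. } nra. }
    pose proof (Qt j) as Hv. fold P in Hv.
    pose proof (HA t Ht Qt j) as HAj. fold lam P in HAj.
    rewrite (Heq t j Ht) in Hdd.
    assert (Hexp : c * exp (lam * s) >= P * (1 + lam * h)).
    { unfold P. replace (lam * s) with (lam * t + lam * h) by (unfold h; ring). rewrite exp_plus.
      pose proof (exp_ineq1_le (lam * h)). pose proof (exp_pos (lam * t)).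
      rewrite <- Rmult_assoc. apply Rle_ge. apply Rmult_le_compat_l; [|lra].
      apply Rlt_le, Rmult_lt_0_compat; auto. }
    assert (Hq : 0 < q < 1).
    { unfold q. split. apply Rdiv_lt_0_compat; lra.
      apply (Rmult_lt_reg_r tau); auto. unfold Rdiv. rewrite Rmult_assoc, Rinv_l; lra. }
    change ((K + 1) / tau) with lam.
    assert (Hlh : lam * h = (K + 1) * q) by (unfold lam, q; field; apply Rgt_not_eq; lra).
    assert (Heh : eta * h = (2 * c - b) * q) by (unfold eta, q; field; apply Rgt_not_eq; lra).
    rewrite Heh in Hdd. rewrite Hlh in Hexp.
    replace ((s - t) * ((- e t j + A t j) / tau)) with (q * (- e t j + A t j)) in Hdd by (unfold q, h; field; apply Rgt_not_eq; lra).
    set (v := e t j) in *. set (w := A t j) in *. set (z := e s j) in *.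
    assert (Rabs (z - v - q * (- v + w)) <= (2 * c - b) * q) by auto.
    assert (Rabs (v * (1 - q)) <= P * (1 - q)) by (rewrite Rabs_mult, (Rabs_right (1 - q)) by lra; apply Rmult_le_compat_r; lra).
    assert (Rabs (q * w) <= q * (K * P + b)) by (rewrite Rabs_mult, (Rabs_right q) by lra; apply Rmult_le_compat_l; lra).
    assert (Rabs z <= P * (1 - q) + q * (K * P + b) + (2 * c - b) * q).
    { revert H H1 H2. generalize (z - v - q * (- v + w)). intros r.
      replace z with (v * (1 - q) + q * w + (z - v - q * (- v + w))) at 1 by ring.
      intros. eapply Rle_trans; [apply Rabs_triang|].
      eapply Rle_trans; [apply Rplus_le_compat_r; apply Rabs_triang|]. lra. }
    nra.
Qed.


Lemma h_equicont p (Hp : prime (Z.of_nat p)) (h : R -> Zp p -> R) : cont_time_CZp h ->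
  forall T, 0 <= T -> forall eta, 0 < eta -> exists m, forall t, 0 <= t <= T ->
    forall x x', in_ball m x x' -> Rabs (h t x - h t x') <= eta.
Proof.
  intros [Hc1 Hc2] T HT eta Heta.
  assert (Hq : forall t, 0 <= t <= T -> exists m, forall t', 0 <= t' <= t ->
    forall x x', in_ball m x x' -> Rabs (h t' x - h t' x') <= eta).
  { apply (real_ind T _ HT). intros t Ht Hprev.
    destruct (Hc2 t (eta/3) ltac:(lra) ltac:(lra)) as [d [Hd Hcl]].
    destruct (unif_cont p Hp (h t) (Hc1 t ltac:(lra)) (eta/3) ltac:(lra)) as [m0 Hm0].
    assert (Key : forall t', 0 <= t' -> Rabs (t' - t) < d -> forall x x', in_ball m0 x x' ->
       Rabs (h t' x - h t' x') <= eta).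
    { intros t' Ht' Htd x x' Hb. pose proof (Hcl t' Ht' Htd x). pose proof (Hcl t' Ht' Htd x').
      pose proof (Hm0 x x' Hb). revert H H0 H1. generalize (h t' x) (h t' x') (h t x) (h t x'). intros. rabs. }
    exists d. split; auto.
    destruct (Rlt_or_le (t - d/2) 0) as [Hneg|Hpos].
    - intros s Hs. exists m0. intros t' Ht' x x' Hb. apply (Key t'); [lra| |auto]. rabs.
    - intros s Hs. destruct (Hprev (t - d/2) ltac:(lra)) as [m1 Hm1].
      exists (Nat.max m0 m1). intros t' Ht' x x' Hb.
      destruct (Rle_or_lt t' (t - d/2)).
      + apply Hm1; [lra|]. apply (in_ball_mono p Hp _ _ _ (Nat.max m0 m1)); auto; lia.
      + apply (Key t'); [lra| |]. rabs. apply (in_ball_mono p Hp _ _ _ (Nat.max m0 m1)); auto; lia. }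
  destruct (Hq T (conj HT (Rle_refl T))) as [m Hm]. exists m. intros. apply Hm; auto.
Qed.


Lemma conv_lip p (Hp : prime (Z.of_nat p)) (w f g : Zp p -> R) W B D x :
  (forall y, Rabs (w y) <= W) -> (forall y, Rabs (f y) <= B) -> (forall y, Rabs (f y - g y) <= D) ->
  Rabs (conv p Hp w f x - conv p Hp w g x) <= W * D.
Proof.
  intros Hw Hf Hfg. unfold conv. apply haar_diff with (B := W * B).
  - intros y. rewrite Rabs_mult. apply Rmult_le_compat; auto using Rabs_pos.
  - intros y. rewrite <- Rmult_minus_distr_l, Rabs_mult. apply Rmult_le_compat; auto using Rabs_pos.
Qed.

Lemma conv_equi p (Hp : prime (Z.of_nat p)) (w f : Zp p -> R) W B eps m x x' :
  (forall z z', in_ball m z z' -> Rabs (w z - w z') <= eps) ->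
  (forall y, Rabs (w y) <= W) -> (forall y, Rabs (f y) <= B) -> in_ball m x x' ->
  Rabs (conv p Hp w f x - conv p Hp w f x') <= eps * B.
Proof.
  intros Hm Hw Hf Hb. unfold conv. apply haar_diff with (B := W * B).
  - intros y. rewrite Rabs_mult. apply Rmult_le_compat; auto using Rabs_pos.
  - intros y. rewrite <- Rmult_minus_distr_r, Rabs_mult. apply Rmult_le_compat; auto using Rabs_pos.
    apply Hm. apply in_ball_sub. auto.
Qed.

Lemma C1_lin p (E I E' I' : R -> Zp p -> R) : C1_X E I E' I' ->
  forall t, 0 <= t -> forall eta, 0 < eta -> exists d, 0 < d /\ forall s, 0 <= s -> Rabs (s - t) < d ->
  forall x, Rabs (E s x - E t x - (s - t) * E' t x) <= eta * Rabs (s - t) /\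
            Rabs (I s x - I t x - (s - t) * I' t x) <= eta * Rabs (s - t).
Proof.
  intros [_ [H2 _]] t Ht eta Heta. destruct (H2 t eta Ht Heta) as [d [Hd Hs]].
  exists d. split; auto. intros s Hs0 Hst x.
  destruct (Req_dec s t) as [->|Hne].
  - rewrite !Rminus_diag, !Rmult_0_l, !Rminus_0_r, Rabs_R0, Rmult_0_r. lra.
  - destruct (Hs s Hs0 Hne Hst) as [HE HI]. specialize (HE x). specialize (HI x). simpl in HE, HI.
    assert (Hnz : s - t <> 0) by lra.
    replace (E s x - E t x - (s - t) * E' t x) with ((s - t) * ((E s x - E t x) / (s - t) - E' t x)) by (field; auto).
    replace (I s x - I t x - (s - t) * I' t x) with ((s - t) * ((I s x - I t x) / (s - t) - I' t x)) by (field; auto).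
    rewrite !Rabs_mult. split; rewrite (Rmult_comm eta); apply Rmult_le_compat_l; auto using Rabs_pos.
Qed.

Lemma ode_form (E' E H tau : R) : 0 < tau -> E' + E / tau = H / tau -> E' = (- E + H) / tau.
Proof. intros Ht Heq. replace ((- E + H) / tau) with (H / tau - E / tau) by (field; apply Rgt_not_eq; lra). lra. Qed.


Lemma sol_bound p (Hp : prime (Z.of_nat p)) tau SE SI wEE wEI wIE wII hE hI E0 I0 E I M T :
  0 < tau -> 0 <= T -> 0 <= M -> (forall a, Rabs (SE a) <= M) -> (forall a, Rabs (SI a) <= M) ->
  cont_Zp E0 -> cont_Zp I0 ->
  is_solution p Hp tau SE SI wEE wEI wIE wII hE hI E0 I0 E I ->
  exists B, 0 <= B /\ forall t, 0 <= t <= T -> forall x, Rabs (E t x) <= B /\ Rabs (I t x) <= B.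
Proof.
  intros Htau HT HM HSE HSI HE0 HI0 (E' & I' & HC1 & HE0e & HI0e & Heq).
  destruct (cont_bounded p Hp E0 HE0) as [BE [HBE0 HBE]].
  destruct (cont_bounded p Hp I0 HI0) as [BI [HBI0 HBI]].
  set (a := BE + BI). set (c := a + M + 1).
  pose proof (barrier (bool * Zp p) tau T a M c 0
    (fun t (j : bool * Zp p) => if fst j then E t (snd j) else I t (snd j))
    (fun t (j : bool * Zp p) => if fst j then E' t (snd j) else I' t (snd j))
    (fun t (j : bool * Zp p) => if fst j then H_E p Hp SE wEE wEI hE (E t) (I t) t (snd j)
                else H_I p Hp SI wIE wII hI (E t) (I t) t (snd j))) as Hb.
  exists (c * exp ((0 + 1) / tau * T)). split.
  { apply Rlt_le, Rmult_lt_0_compat; [unfold c, a; lra|apply exp_pos]. }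
  intros t Ht x.
  assert (Hle : c * exp ((0 + 1) / tau * t) <= c * exp ((0 + 1) / tau * T)).
  { apply Rmult_le_compat_l; [unfold c, a; lra|]. apply exp_mono.
    apply Rmult_le_compat_l; [|lra]. apply Rlt_le, Rdiv_lt_0_compat; lra. }
  assert (Hall : forall j : bool * Zp p, Rabs (if fst j then E t (snd j) else I t (snd j))
     <= c * exp ((0 + 1) / tau * t)).
  { apply (Hb Htau (Rle_refl 0)); auto; try (unfold c, a; lra).
    - intros [[|] y]; simpl; [rewrite HE0e | rewrite HI0e]; unfold a; [specialize (HBE y)|specialize (HBI y)]; lra.
    - intros t0 Ht0 eta Heta. destruct (C1_lin p E I E' I' HC1 t0 ltac:(lra) eta Heta) as [d [Hd Hs]].
      exists d. split; auto. intros s Hs0 Hst [[|] y]; simpl; apply (Hs s Hs0 Hst y).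
    - intros t0 [[|] y] Ht0; simpl; apply ode_form; auto; apply (Heq t0 y); lra.
    - intros t0 Ht0 _ [[|] y]; simpl; rewrite Rmult_0_l, Rplus_0_l; unfold H_E, H_I; auto. }
  split; [apply (Rle_trans _ _ _ (Hall (true, x))) | apply (Rle_trans _ _ _ (Hall (false, x)))]; auto.
Qed.

Lemma H_equi p (Hp : prime (Z.of_nat p)) (S : R -> R) L (w1 w2 : Zp p -> R) h
  (f1 f2 : R -> Zp p -> R) B T :
  0 <= L -> (forall a b, Rabs (S a - S b) <= L * Rabs (a - b)) -> cont_Zp w1 -> cont_Zp w2 ->
  cont_time_CZp h -> 0 <= T -> 0 <= B ->
  (forall t, 0 <= t <= T -> forall x, Rabs (f1 t x) <= B /\ Rabs (f2 t x) <= B) ->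
  forall eta, 0 < eta -> exists m, forall t, 0 <= t <= T -> forall x x', in_ball m x x' ->
   Rabs (S (conv p Hp w1 (f1 t) x - conv p Hp w2 (f2 t) x + h t x)
       - S (conv p Hp w1 (f1 t) x' - conv p Hp w2 (f2 t) x' + h t x')) <= eta.
Proof.
  intros HL HS Hw1 Hw2 Hh HT HB Hf eta Heta.
  set (e1 := eta / (3 * (L + 1) * (B + 1))).
  assert (He1 : 0 < e1) by (unfold e1; apply Rdiv_lt_0_compat; [lra|]; apply Rmult_lt_0_compat; lra).
  assert (He1e : e1 * (3 * (L + 1) * (B + 1)) = eta) by (unfold e1; field; split; apply Rgt_not_eq; lra).
  destruct (unif_cont p Hp w1 Hw1 e1 He1) as [m1 Hm1].
  destruct (unif_cont p Hp w2 Hw2 e1 He1) as [m2 Hm2].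
  destruct (h_equicont p Hp h Hh T HT e1 He1) as [m3 Hm3].
  destruct (cont_bounded p Hp w1 Hw1) as [W1 [_ HW1]].
  destruct (cont_bounded p Hp w2 Hw2) as [W2 [_ HW2]].
  exists (Nat.max m1 (Nat.max m2 m3)). intros t Ht x x' Hb.
  assert (B1 : Rabs (conv p Hp w1 (f1 t) x - conv p Hp w1 (f1 t) x') <= e1 * B).
  { apply (conv_equi p Hp w1 (f1 t) W1 B e1 m1); auto.
    - intros y; apply (Hf t Ht y).
    - apply (in_ball_mono p Hp _ _ _ (Nat.max m1 (Nat.max m2 m3))); auto; lia. }
  assert (B2 : Rabs (conv p Hp w2 (f2 t) x - conv p Hp w2 (f2 t) x') <= e1 * B).
  { apply (conv_equi p Hp w2 (f2 t) W2 B e1 m2); auto.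
    - intros y; apply (Hf t Ht y).
    - apply (in_ball_mono p Hp _ _ _ (Nat.max m1 (Nat.max m2 m3))); auto; lia. }
  assert (B3 : Rabs (h t x - h t x') <= e1).
  { apply Hm3; auto. apply (in_ball_mono p Hp _ _ _ (Nat.max m1 (Nat.max m2 m3))); auto; lia. }
  eapply Rle_trans; [apply HS|].
  assert (Rabs (conv p Hp w1 (f1 t) x - conv p Hp w2 (f2 t) x + h t x -
    (conv p Hp w1 (f1 t) x' - conv p Hp w2 (f2 t) x' + h t x')) <= e1 * B + e1 * B + e1).
  { revert B1 B2 B3. generalize (conv p Hp w1 (f1 t) x) (conv p Hp w1 (f1 t) x')
      (conv p Hp w2 (f2 t) x) (conv p Hp w2 (f2 t) x') (h t x) (h t x'). intros. rabs. }
  apply Rle_trans with (L * (e1 * B + e1 * B + e1)); [apply Rmult_le_compat_l; auto|].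
  rewrite <- He1e. nra.
Qed.


Theorem theorem2 (p : nat) (Hp : prime (Z.of_nat p)) (tau : R) (Htau : 0 < tau)
  (SE SI : R -> R) (HSE : bounded_lipschitz SE) (HSI : bounded_lipschitz SI)
  (HSE0 : SE 0 = 0) (HSI0 : SI 0 = 0)
  (wEE wEI wIE wII : Zp p -> R)
  (HwEE : cont_Zp wEE) (HwEI : cont_Zp wEI) (HwIE : cont_Zp wIE) (HwII : cont_Zp wII)
  (hE hI : R -> Zp p -> R) (HhE : cont_time_CZp hE) (HhI : cont_time_CZp hI)
  (E0 I0 : Zp p -> R) (HE0 : cont_Zp E0) (HI0 : cont_Zp I0)
  (E I : R -> Zp p -> R)
  (Hsol : is_solution p Hp tau SE SI wEE wEI wIE wII hE hI E0 I0 E I)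
  (El Il : nat -> R -> Zp p -> R)
  (Hsoll : forall l : nat, (1 <= l)%nat ->
     is_disc_solution p Hp l tau SE SI wEE wEI wIE wII hE hI E0 I0 (El l) (Il l)) :
  forall T : R, 0 < T ->
  forall eps : R, 0 < eps -> exists L : nat, forall l : nat, (1 <= l)%nat -> (L <= l)%nat ->
    forall t : R, 0 <= t <= T ->
      unif_close (El l t) (E t) eps /\ unif_close (Il l t) (I t) eps.
Proof.
  intros T HT eps Heps.
  destruct HSE as [[ME HME] [LE0 HLE0]]. destruct HSI as [[MI HMI] [LI0 HLI0]].
  set (M := Rabs ME + Rabs MI).
  assert (HM : 0 <= M) by (unfold M; pose proof (Rabs_pos ME); pose proof (Rabs_pos MI); lra).
  assert (HSEM : forall a, Rabs (SE a) <= M).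
  { intros a. specialize (HME a). unfold M. pose proof (Rle_abs ME). pose proof (Rabs_pos MI). lra. }
  assert (HSIM : forall a, Rabs (SI a) <= M).
  { intros a. specialize (HMI a). unfold M. pose proof (Rle_abs MI). pose proof (Rabs_pos ME). lra. }
  set (LE := Rabs LE0). set (LI := Rabs LI0).
  assert (HLE : forall a b, Rabs (SE a - SE b) <= LE * Rabs (a - b)).
  { intros a b. eapply Rle_trans; [apply HLE0|]. apply Rmult_le_compat_r; [apply Rabs_pos|apply Rle_abs]. }
  assert (HLI : forall a b, Rabs (SI a - SI b) <= LI * Rabs (a - b)).
  { intros a b. eapply Rle_trans; [apply HLI0|]. apply Rmult_le_compat_r; [apply Rabs_pos|apply Rle_abs]. }
  assert (HLE1 : 0 <= LE) by apply Rabs_pos. assert (HLI1 : 0 <= LI) by apply Rabs_pos.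
  destruct (sol_bound p Hp tau SE SI wEE wEI wIE wII hE hI E0 I0 E I M T Htau ltac:(lra) HM HSEM HSIM HE0 HI0 Hsol)
    as [BU [HBU0 HBU]].
  destruct (cont_bounded p Hp wEE HwEE) as [WEE [HWEE0 HWEE]].
  destruct (cont_bounded p Hp wEI HwEI) as [WEI [HWEI0 HWEI]].
  destruct (cont_bounded p Hp wIE HwIE) as [WIE [HWIE0 HWIE]].
  destruct (cont_bounded p Hp wII HwII) as [WII [HWII0 HWII]].
  set (K := LE * (WEE + WEI) + LI * (WIE + WII)).
  assert (HK : 0 <= K) by (unfold K; nra).
  set (X := exp ((K + 1) / tau * T)).
  assert (HX : 0 < X) by apply exp_pos.
  set (c := eps / (2 * X)).
  assert (Hc : 0 < c) by (unfold c; apply Rdiv_lt_0_compat; lra).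
  assert (HcX : c * X = eps / 2) by (unfold c; field; apply Rgt_not_eq; lra).
  destruct (unif_cont p Hp E0 HE0 (c/2) ltac:(lra)) as [mE HmE].
  destruct (unif_cont p Hp I0 HI0 (c/2) ltac:(lra)) as [mI HmI].
  destruct (H_equi p Hp SE LE wEE wEI hE E I BU T HLE1 HLE HwEE HwEI HhE ltac:(lra) HBU0
     (fun t Ht x => HBU t Ht x) c Hc) as [mHE HmHE].
  destruct (H_equi p Hp SI LI wIE wII hI E I BU T HLI1 HLI HwIE HwII HhI ltac:(lra) HBU0
     (fun t Ht x => HBU t Ht x) c Hc) as [mHI HmHI].
  exists (Nat.max mE (Nat.max mI (Nat.max mHE mHI))).
  intros l Hl1 HlL t Ht.
  destruct (Hsoll l Hl1) as (El' & Il' & HlC1 & HlD & HlE0 & HlI0 & Hleq).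
  destruct Hsol as (E' & I' & HC1 & HE0e & HI0e & Heq).
  assert (Hin : forall m x, (m <= l)%nat -> in_ball m x (rep p Hp l x)).
  { intros m x Hm. apply (in_ball_mono p Hp _ _ _ l); auto. apply rep_in_ball. }
  pose proof (barrier (bool * Zp p) tau T (c/2) c c K
    (fun t (j : bool * Zp p) => if fst j then El l t (snd j) - E t (snd j) else Il l t (snd j) - I t (snd j))
    (fun t (j : bool * Zp p) => if fst j then El' t (snd j) - E' t (snd j) else Il' t (snd j) - I' t (snd j))
    (fun t (j : bool * Zp p) => if fst j then
        Pl p Hp l (H_E p Hp SE wEE wEI hE (El l t) (Il l t) t) (snd j) - H_E p Hp SE wEE wEI hE (E t) (I t) t (snd j)
      else Pl p Hp l (H_I p Hp SI wIE wII hI (El l t) (Il l t) t) (snd j) - H_I p Hp SI wIE wII hI (E t) (I t) t (snd j)))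
    as Hb.
  assert (Hall : forall j : bool * Zp p,
     Rabs (if fst j then El l t (snd j) - E t (snd j) else Il l t (snd j) - I t (snd j))
     <= c * exp ((K + 1) / tau * t)).
  { apply (Hb Htau HK Hc ltac:(lra) ltac:(lra) ltac:(lra)); auto.
    - intros [[|] y]; simpl.
      + rewrite HlE0, HE0e, Pl_rep. rewrite <- Rabs_Ropp, Ropp_minus_distr. apply HmE. apply Hin. lia.
      + rewrite HlI0, HI0e, Pl_rep. rewrite <- Rabs_Ropp, Ropp_minus_distr. apply HmI. apply Hin. lia.
    - intros t0 Ht0 eta Heta.
      destruct (C1_lin p (El l) (Il l) El' Il' HlC1 t0 ltac:(lra) (eta/2) ltac:(lra)) as [d1 [Hd1 Hs1]].
      destruct (C1_lin p E I E' I' HC1 t0 ltac:(lra) (eta/2) ltac:(lra)) as [d2 [Hd2 Hs2]].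
      exists (Rmin d1 d2). split; [apply Rmin_pos; auto|]. intros s Hs0 Hst.
      assert (Hst1 : Rabs (s - t0) < d1) by (pose proof (Rmin_l d1 d2); lra).
      assert (Hst2 : Rabs (s - t0) < d2) by (pose proof (Rmin_r d1 d2); lra).
      intros [[|] y]; simpl.
      + destruct (Hs1 s Hs0 Hst1 y) as [A1 _]. destruct (Hs2 s Hs0 Hst2 y) as [A2 _].
        revert A1 A2. generalize (Rabs (s - t0)). intros r A1 A2.
        replace (El l s y - E s y - (El l t0 y - E t0 y) - (s - t0) * (El' t0 y - E' t0 y)) with
          ((El l s y - El l t0 y - (s - t0) * El' t0 y) - (E s y - E t0 y - (s - t0) * E' t0 y)) by ring.
        revert A1 A2. generalize (El l s y - El l t0 y - (s - t0) * El' t0 y) (E s y - E t0 y - (s - t0) * E' t0 y).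
        intros. rabs.
      + destruct (Hs1 s Hs0 Hst1 y) as [_ A1]. destruct (Hs2 s Hs0 Hst2 y) as [_ A2].
        revert A1 A2. generalize (Rabs (s - t0)). intros r A1 A2.
        replace (Il l s y - I s y - (Il l t0 y - I t0 y) - (s - t0) * (Il' t0 y - I' t0 y)) with
          ((Il l s y - Il l t0 y - (s - t0) * Il' t0 y) - (I s y - I t0 y - (s - t0) * I' t0 y)) by ring.
        revert A1 A2. generalize (Il l s y - Il l t0 y - (s - t0) * Il' t0 y) (I s y - I t0 y - (s - t0) * I' t0 y).
        intros. rabs.
    - intros t0 [[|] y] Ht0; simpl.
      + rewrite (ode_form _ _ _ _ Htau (proj1 (Hleq t0 y ltac:(lra)))),
          (ode_form _ _ _ _ Htau (proj1 (Heq t0 y ltac:(lra)))). field. apply Rgt_not_eq; lra.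
      + rewrite (ode_form _ _ _ _ Htau (proj2 (Hleq t0 y ltac:(lra)))),
          (ode_form _ _ _ _ Htau (proj2 (Heq t0 y ltac:(lra)))). field. apply Rgt_not_eq; lra.
    - intros t0 Ht0 Hall0.
      set (phi := c * exp ((K + 1) / tau * t0)) in *.
      assert (Hphi : 0 <= phi) by (unfold phi; apply Rlt_le, Rmult_lt_0_compat; auto; apply exp_pos).
      assert (HdE : forall z, Rabs (El l t0 z - E t0 z) <= phi) by (intros z; apply (Hall0 (true, z))).
      assert (HdI : forall z, Rabs (Il l t0 z - I t0 z) <= phi) by (intros z; apply (Hall0 (false, z))).
      destruct (proj1 HlC1 t0 ltac:(lra)) as [HcE [HcI _]].
      destruct (cont_bounded p Hp _ HcE) as [BE [_ HBE]].
      destruct (cont_bounded p Hp _ HcI) as [BI [_ HBI]].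
      assert (Hr : forall y, in_ball (Nat.max mHE mHI) (rep p Hp l y) y).
      { intros y. apply in_ball_sym. apply Hin. lia. }
      assert (HK' : LE * (WEE * phi + WEI * phi) <= K * phi /\ LI * (WIE * phi + WII * phi) <= K * phi).
      { assert (0 <= LI * (WIE + WII) * phi) by (apply Rmult_le_pos; [apply Rmult_le_pos|]; lra).
        assert (0 <= LE * (WEE + WEI) * phi) by (apply Rmult_le_pos; [apply Rmult_le_pos|]; lra).
        unfold K. split; lra. }
      intros [[|] y]; simpl; rewrite Pl_rep; set (r := rep p Hp l y).
      + assert (S1 : Rabs (H_E p Hp SE wEE wEI hE (El l t0) (Il l t0) t0 r - H_E p Hp SE wEE wEI hE (E t0) (I t0) t0 r)
           <= LE * (WEE * phi + WEI * phi)).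
        { unfold H_E. eapply Rle_trans; [apply HLE|]. apply Rmult_le_compat_l; auto.
          pose proof (conv_lip p Hp wEE (El l t0) (E t0) WEE BE phi r HWEE HBE HdE).
          pose proof (conv_lip p Hp wEI (Il l t0) (I t0) WEI BI phi r HWEI HBI HdI).
          revert H H0. generalize (conv p Hp wEE (El l t0) r) (conv p Hp wEE (E t0) r)
            (conv p Hp wEI (Il l t0) r) (conv p Hp wEI (I t0) r) (hE t0 r). intros. rabs. }
        assert (S2 : Rabs (H_E p Hp SE wEE wEI hE (E t0) (I t0) t0 r - H_E p Hp SE wEE wEI hE (E t0) (I t0) t0 y) <= c).
        { unfold H_E. apply HmHE; auto. apply (in_ball_mono p Hp _ _ _ (Nat.max mHE mHI)); [lia|apply Hr]. }
        destruct HK' as [HK1 _]. revert S1 S2 HK1.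
        generalize (H_E p Hp SE wEE wEI hE (El l t0) (Il l t0) t0 r) (H_E p Hp SE wEE wEI hE (E t0) (I t0) t0 r)
          (H_E p Hp SE wEE wEI hE (E t0) (I t0) t0 y). intros. rabs.
      + assert (S1 : Rabs (H_I p Hp SI wIE wII hI (El l t0) (Il l t0) t0 r - H_I p Hp SI wIE wII hI (E t0) (I t0) t0 r)
           <= LI * (WIE * phi + WII * phi)).
        { unfold H_I. eapply Rle_trans; [apply HLI|]. apply Rmult_le_compat_l; auto.
          pose proof (conv_lip p Hp wIE (El l t0) (E t0) WIE BE phi r HWIE HBE HdE).
          pose proof (conv_lip p Hp wII (Il l t0) (I t0) WII BI phi r HWII HBI HdI).
          revert H H0. generalize (conv p Hp wIE (El l t0) r) (conv p Hp wIE (E t0) r)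
            (conv p Hp wII (Il l t0) r) (conv p Hp wII (I t0) r) (hI t0 r). intros. rabs. }
        assert (S2 : Rabs (H_I p Hp SI wIE wII hI (E t0) (I t0) t0 r - H_I p Hp SI wIE wII hI (E t0) (I t0) t0 y) <= c).
        { unfold H_I. apply HmHI; auto. apply (in_ball_mono p Hp _ _ _ (Nat.max mHE mHI)); [lia|apply Hr]. }
        destruct HK' as [_ HK1]. revert S1 S2 HK1.
        generalize (H_I p Hp SI wIE wII hI (El l t0) (Il l t0) t0 r) (H_I p Hp SI wIE wII hI (E t0) (I t0) t0 r)
          (H_I p Hp SI wIE wII hI (E t0) (I t0) t0 y). intros. rabs. }
  assert (Hfin : c * exp ((K + 1) / tau * t) <= eps / 2).
  { rewrite <- HcX. apply Rmult_le_compat_l; [lra|]. unfold X. apply exp_mono.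
    apply Rmult_le_compat_l; [|lra]. apply Rlt_le, Rdiv_lt_0_compat; lra. }
  split; intros x; [pose proof (Hall (true, x)) | pose proof (Hall (false, x))]; simpl in *; lra.
Qed.
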